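(* Consider a spacecraft moving on a hyperbolic flyby trajectory past the earth under Newtonian gravity plus the small perturbing force (per unit mass) \[ F = 2\omega_\oplus R_\oplus \left[ \frac{2GM_\oplus}{r^2} \cos \delta ~\hat{e}_r + \frac{v^2}{r} \sin \delta ~\hat{e}_\delta \right]. \] Then, to leading order in the perturbation, the differential $\Delta v_\infty$ between the outgoing asymptotic speed $v_1$ and the incoming asymptotic speed $v_0$ satisfies \[ \frac{\Delta v_\infty}{v_\infty} = 2 \omega_\oplus R_\oplus \left( \cos \delta_0 - \cos \delta_1 \right). \]
   Context: Units with $c=1$. Spherical coordinates centered on the earth: radius $r$, declination $\delta$ (measured from the equatorial plane), azimuth $\phi$; $\hat{e}_r$, $\hat{e}_\delta$ are the orthonormal radial and declination unit vectors. $\omega_\oplus$ is the earth's rotational angular velocity, $R_\oplus$ its radius, $M_\oplus$ its mass, $G$ Newton's constant. $v$ denotes the spacecraft's speed and $\mathbf{v}$ its velocity; $v_\infty$ its asymptotic speed. $\delta_0$ and $\delta_1$ are the declinations of the planes (through the spacecraft and the earth's center of mass) containing the incoming resp. outgoing asymptotic velocity vectors. The energy per unit mass $E = \frac{1}{2}v^2 - \frac{GM_\oplus}{r}$ is approximately conserved, and $\Delta v_\infty/v_\infty = \Delta E/(2E)$ with $\Delta E = \int_{-\infty}^{\infty} \mathbf{F}\cdot\mathbf{v}\,dt$. This force law is the paper's derived post-Einsteinian correction (from an inertial frame dragging linear in the earth's rotational velocity) after dropping terms shown not to contribute; the resulting formula is Anderson et al.'s semi-empirical flyby-anomaly prediction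 formula. *)

(* Defs.v *)
From Stdlib Require Import Reals.
From Coquelicot Require Import Coquelicot.
Open Scope R_scope.

(* Earth-centred Cartesian coordinates (a,b,c); the z-axis (c) is the
   earth's rotation axis, the equatorial plane is c = 0. *)
Definition norm3 (a b c : R) : R := sqrt (a ^ 2 + b ^ 2 + c ^ 2).

Definition declination (a b c : R) : R := asin (c / norm3 a b c).

(* cos and sin of the azimuth phi; on the polar axis (where phi is undefined)
   we use the convention phi = 0. *)
Definition cos_azimuth (a b : R) : R :=
  let rho := sqrt (a ^ 2 + b ^ 2) in
  if Req_EM_T rho 0 then 1 else a / rho.
Definition sin_azimuth (a b : R) : R :=
  let rho := sqrt (a ^ 2 + b ^ 2) in
  if Req_EM_T rho 0 then 0 else b / rho.

Definition e_r_dot (a b c wa wb wc : R) : R :=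
  let r := norm3 a b c in (a / r) * wa + (b / r) * wb + (c / r) * wc.

Definition e_delta_dot (a b c wa wb wc : R) : R :=
  let d := declination a b c in
  - sin d * cos_azimuth a b * wa - sin d * sin_azimuth a b * wb + cos d * wc.

Definition flyby_force_dot_v (G M omega Re a b c va vb vc : R) : R :=
  let r := norm3 a b c in
  let d := declination a b c in
  let v2 := va ^ 2 + vb ^ 2 + vc ^ 2 in
  2 * omega * Re *
    ((2 * G * M / r ^ 2) * cos d * e_r_dot a b c va vb vc
     + (v2 / r) * sin d * e_delta_dot a b c va vb vc).

(* Main.v *)
Require Import Defs.
From Stdlib Require Import Reals Lra Psatz Classical ClassicalEpsilon.
From Coquelicot Require Import Coquelicot.
Open Scope R_scope.

Definition rr (x y z : R -> R) t := norm3 (x t) (y t) (z t).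
Definition VV (vx vy vz : R -> R) t := vx t ^ 2 + vy t ^ 2 + vz t ^ 2.
Definition pp (x y z vx vy vz : R -> R) t := x t * vx t + y t * vy t + z t * vz t.
Definition qq (x y vx vy : R -> R) t := x t * vx t + y t * vy t.
Definition rho (x y : R -> R) t := sqrt (x t ^ 2 + y t ^ 2).

Definition Traj (G M : R) (x y z vx vy vz : R -> R) : Prop :=
  (forall t, 0 < norm3 (x t) (y t) (z t)) /\
  (forall t, is_derive x t (vx t)) /\
  (forall t, is_derive y t (vy t)) /\
  (forall t, is_derive z t (vz t)) /\
  (forall t, is_derive vx t (- G * M * x t / norm3 (x t) (y t) (z t) ^ 3)) /\
  (forall t, is_derive vy t (- G * M * y t / norm3 (x t) (y t) (z t) ^ 3)) /\
  (forall t, is_derive vz t (- G * M * z t / norm3 (x t) (y t) (z t) ^ 3)).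

Lemma norm3_sq a b c : norm3 a b c ^ 2 = a^2 + b^2 + c^2.
Proof. unfold norm3. rewrite pow2_sqrt; nra. Qed.

Lemma norm3_pos_sq a b c : 0 < norm3 a b c -> 0 < a^2 + b^2 + c^2.
Proof. unfold norm3; intro H. destruct (Rle_lt_dec (a^2+b^2+c^2) 0) as [h|h]; auto.
  rewrite sqrt_neg_0 in H; lra. Qed.

Ltac exd := match goal with
  | |- ex_derive _ _ => eexists; solve [eauto]
  end.

Ltac rwD H := rewrite ?(is_derive_unique _ _ _ (H _)).
Ltac rwD2 H := match type of H with is_derive ?f ?t ?l =>
  let E := fresh in assert (E : Derive (fun s => f s) t = l) by (apply is_derive_unique; exact H);
  rewrite E; clear E end.

Lemma rr_derive G M x y z vx vy vz t : Traj G M x y z vx vy vz ->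
  is_derive (rr x y z) t (pp x y z vx vy vz t / rr x y z t).
Proof.
  intros (Hr & Hx & Hy & Hz & _).
  unfold rr, pp. unfold norm3 at 1.
  assert (H0 := norm3_pos_sq _ _ _ (Hr t)).
  auto_derive.
  - repeat split; try exd. nra.
  - rwD Hx. rwD Hy. rwD Hz. unfold norm3. replace (x t ^ 2 + y t ^2 + z t ^ 2) with (x t * (x t * 1) + y t * (y t * 1) + z t * (z t * 1)) by ring. field. apply Rgt_not_eq, sqrt_lt_R0. nra.
Qed.

Lemma traj_exd G M x y z vx vy vz t : Traj G M x y z vx vy vz ->
  ex_derive x t /\ ex_derive y t /\ ex_derive z t /\
  ex_derive vx t /\ ex_derive vy t /\ ex_derive vz t.
Proof. intros (_ & Hx & Hy & Hz & Hvx & Hvy & Hvz). repeat split; exd. Qed.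

Lemma rr_pos G M x y z vx vy vz t : Traj G M x y z vx vy vz -> 0 < rr x y z t.
Proof. intros [H _]. apply H. Qed.

Lemma VV_derive G M x y z vx vy vz t : Traj G M x y z vx vy vz ->
  is_derive (VV vx vy vz) t (-2 * G * M * pp x y z vx vy vz t / rr x y z t ^ 3).
Proof.
  intros (Hr & Hx & Hy & Hz & Hvx & Hvy & Hvz).
  unfold VV, pp, rr.
  auto_derive.
  - repeat split; try exd.
  - rwD Hvx. rwD Hvy. rwD Hvz. field. apply Rgt_not_eq, Hr.
Qed.

Lemma pp_exd G M x y z vx vy vz t : Traj G M x y z vx vy vz ->
  ex_derive (pp x y z vx vy vz) t.
Proof.
  intros H. destruct (traj_exd _ _ _ _ _ _ _ _ t H) as (?&?&?&?&?&?).
  unfold pp. auto_derive. tauto.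
Qed.

Lemma qq_exd G M x y z vx vy vz t : Traj G M x y z vx vy vz ->
  ex_derive (qq x y vx vy) t.
Proof.
  intros H. destruct (traj_exd _ _ _ _ _ _ _ _ t H) as (?&?&?&?&?&?).
  unfold qq. auto_derive. tauto.
Qed.

Lemma rho_derive G M x y z vx vy vz t : Traj G M x y z vx vy vz ->
  0 < rho x y t -> is_derive (rho x y) t (qq x y vx vy t / rho x y t).
Proof.
  intros (Hr & Hx & Hy & Hz & _) Hp.
  unfold rho, qq in *.
  assert (H0 : 0 < x t ^ 2 + y t ^ 2).
  { destruct (Rle_lt_dec (x t^2+y t^2) 0) as [h|h]; auto. rewrite sqrt_neg_0 in Hp; lra. }
  auto_derive.
  - repeat split; try exd. nra.
  - rwD Hx. rwD Hy.
    replace (x t ^ 2 + y t ^ 2) with (x t * (x t * 1) + y t * (y t * 1)) by ring.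
    field. apply Rgt_not_eq, sqrt_lt_R0. nra.
Qed.

Definition Dform K G M (x y z vx vy vz h dh : R -> R) t :=
  - K * ( (-2 * G * M * pp x y z vx vy vz t / rr x y z t ^ 3) * h t / rr x y z t
          + VV vx vy vz t * dh t / rr x y z t
          - VV vx vy vz t * h t * pp x y z vx vy vz t / rr x y z t ^ 3).

Lemma Gh_derive K G M x y z vx vy vz (h dh : R -> R) (t : R) : Traj G M x y z vx vy vz ->
  is_derive h t (dh t) ->
  is_derive (fun s => - K * VV vx vy vz s * h s / rr x y z s) t (Dform K G M x y z vx vy vz h dh t).
Proof.
  intros H Hh.
  assert (HV := VV_derive _ _ _ _ _ _ _ _ t H).
  assert (HR := rr_derive _ _ _ _ _ _ _ _ t H).
  assert (Hp := rr_pos _ _ _ _ _ _ _ _ t H).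
  auto_derive.
  - repeat split; try (eexists; eassumption). lra.
  - rwD2 HV. rwD2 HR. rwD2 Hh.
    unfold Dform. field. lra.
Qed.

Lemma Dform_cont K G M x y z vx vy vz (h dh : R -> R) (t : R) : Traj G M x y z vx vy vz ->
  ex_derive h t -> ex_derive dh t ->
  continuous (Dform K G M x y z vx vy vz h dh) t.
Proof.
  intros H Hh Hdh.
  cut (ex_derive (Dform K G M x y z vx vy vz h dh) t).
  { intro E. exact (ex_derive_continuous _ _ E). }
  assert (HV := VV_derive _ _ _ _ _ _ _ _ t H).
  assert (HR := rr_derive _ _ _ _ _ _ _ _ t H).
  assert (Hp := rr_pos _ _ _ _ _ _ _ _ t H).
  assert (HP := pp_exd _ _ _ _ _ _ _ _ t H).
  unfold Dform. auto_derive.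
  repeat split; first [exact I | assumption | (eexists; eassumption) | (apply Rgt_not_eq; repeat apply Rmult_lt_0_compat; lra)].
Qed.

Lemma decl_bound a b c : 0 < norm3 a b c -> -1 <= c / norm3 a b c <= 1.
Proof.
  intros Hn. assert (H2 := norm3_sq a b c).
  assert (Hu : (c / norm3 a b c) ^ 2 <= 1).
  { replace ((c / norm3 a b c) ^ 2) with (c^2 / (norm3 a b c)^2) by (field; lra).
    rewrite H2. apply Rmult_le_reg_r with (a^2+b^2+c^2). nra.
    field_simplify; nra. }
  nra.
Qed.

Lemma decl_sin a b c : 0 < norm3 a b c -> sin (declination a b c) = c / norm3 a b c.
Proof. intro Hn. unfold declination. apply sin_asin, decl_bound, Hn. Qed.

Lemma decl_cos a b c : 0 < norm3 a b c ->
  cos (declination a b c) = sqrt (a^2 + b^2) / norm3 a b c.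
Proof.
  intro Hn. unfold declination. rewrite cos_asin by (apply decl_bound, Hn).
  assert (H2 := norm3_sq a b c).
  assert (Hs : 0 <= sqrt (a^2+b^2)) by apply sqrt_pos.
  replace (1 - (c / norm3 a b c)²) with (Rsqr (sqrt (a^2+b^2) / norm3 a b c)).
  - apply sqrt_Rsqr. apply Rdiv_le_0_compat; lra.
  - unfold Rsqr. replace (sqrt (a ^ 2 + b ^ 2) / norm3 a b c * (sqrt (a ^ 2 + b ^ 2) / norm3 a b c))
      with ((sqrt (a ^ 2 + b ^ 2))^2 / (norm3 a b c)^2) by (field; lra).
    rewrite pow2_sqrt by nra.
    replace (1 - c / norm3 a b c * (c / norm3 a b c)) with (1 - c^2 / norm3 a b c ^ 2) by (field; lra).
    rewrite H2. field. nra.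
Qed.

Lemma force_eq_pt G M omega Re a b c va vb vc : 0 < norm3 a b c -> 0 < sqrt (a^2+b^2) ->
  flyby_force_dot_v G M omega Re a b c va vb vc =
  - (2 * omega * Re) * ((-2 * G * M * (a*va+b*vb+c*vc) / norm3 a b c ^ 3) * sqrt (a^2+b^2) / norm3 a b c
     + (va^2+vb^2+vc^2) * ((a*va+b*vb) / sqrt (a^2+b^2)) / norm3 a b c
     - (va^2+vb^2+vc^2) * sqrt (a^2+b^2) * (a*va+b*vb+c*vc) / norm3 a b c ^ 3).
Proof.
  intros Hn Hr.
  unfold flyby_force_dot_v, e_delta_dot, e_r_dot, cos_azimuth, sin_azimuth.
  rewrite decl_cos, decl_sin by exact Hn.
  destruct (Req_EM_T (sqrt (a ^ 2 + b ^ 2)) 0) as [E|_]; [lra|].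
  assert (H2 := norm3_sq a b c).
  assert (H3 : sqrt (a^2+b^2) ^ 2 = a^2 + b^2) by (rewrite pow2_sqrt; nra).
  set (n := norm3 a b c) in *. set (r := sqrt (a^2+b^2)) in *.
  field_simplify_eq; [| lra ].
  assert (Hn3 : n^3 = n*(r^2+c^2)) by (rewrite H3; replace (n^3) with (n*n^2) by ring; rewrite H2; ring).
  rewrite Hn3. ring.
Qed.

Lemma force_eq K G M omega Re x y z vx vy vz t : Traj G M x y z vx vy vz ->
  K = 2 * omega * Re -> 0 < rho x y t ->
  flyby_force_dot_v G M omega Re (x t) (y t) (z t) (vx t) (vy t) (vz t) =
  Dform K G M x y z vx vy vz (rho x y) (fun s => qq x y vx vy s / rho x y s) t.
Proof.
  intros H HK Hr. subst K. rewrite force_eq_pt. reflexivity. apply H. exact Hr.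
Qed.

Definition Gf K (x y z vx vy vz : R -> R) t := - K * VV vx vy vz t * rho x y t / rr x y z t.

Definition ff G M omega Re (x y z vx vy vz : R -> R) t :=
  flyby_force_dot_v G M omega Re (x t) (y t) (z t) (vx t) (vy t) (vz t).

Lemma piece K G M omega Re x y z vx vy vz (h dh : R -> R) u v :
  Traj G M x y z vx vy vz ->
  (forall s, Rmin u v <= s <= Rmax u v -> is_derive h s (dh s)) ->
  (forall s, Rmin u v <= s <= Rmax u v -> ex_derive dh s) ->
  (forall s, Rmin u v <= s <= Rmax u v -> h s = rho x y s) ->
  (forall s, Rmin u v < s < Rmax u v -> ff G M omega Re x y z vx vy vz s = Dform K G M x y z vx vy vz h dh s) ->
  is_RInt (ff G M omega Re x y z vx vy vz) u v (Gf K x y z vx vy vz v - Gf K x y z vx vy vz u).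
Proof.
  intros H Hd Hdd Hh Hf.
  assert (I := is_RInt_derive (fun s => - K * VV vx vy vz s * h s / rr x y z s)
     (Dform K G M x y z vx vy vz h dh) u v).
  assert (Hu : Rmin u v <= u <= Rmax u v) by (split; [apply Rmin_l | apply Rmax_l]).
  assert (Hv : Rmin u v <= v <= Rmax u v) by (split; [apply Rmin_r | apply Rmax_r]).
  replace (Gf K x y z vx vy vz v - Gf K x y z vx vy vz u) with
    (minus (- K * VV vx vy vz v * h v / rr x y z v) (- K * VV vx vy vz u * h u / rr x y z u)).
  2:{ unfold Gf. rewrite (Hh u Hu), (Hh v Hv). reflexivity. }
  apply is_RInt_ext with (Dform K G M x y z vx vy vz h dh).
  { intros s Hs. symmetry. apply Hf. exact Hs. }
  apply I.
  - intros s Hs. apply Gh_derive; auto.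
  - intros s Hs. apply Dform_cont; auto. eexists; apply Hd; auto.
Qed.

Lemma const_of_deriv0 (h : R -> R) a b : (forall t, is_derive h t 0) -> h a = h b.
Proof.
  intros Hd.
  destruct (MVT_gen h a b (fun _ => 0)) as (c & _ & Hc).
  - intros s _. apply Hd.
  - intros s _. apply continuity_pt_filterlim.
    apply (ex_derive_continuous h). eexists; apply Hd.
  - lra.
Qed.

Lemma energy_const G M x y z vx vy vz t : Traj G M x y z vx vy vz ->
  VV vx vy vz t / 2 - G * M / rr x y z t = VV vx vy vz 0 / 2 - G * M / rr x y z 0.
Proof.
  intros H. apply (const_of_deriv0 (fun s => VV vx vy vz s / 2 - G * M / rr x y z s)).
  intro s.
  assert (HV := VV_derive _ _ _ _ _ _ _ _ s H).
  assert (HR := rr_derive _ _ _ _ _ _ _ _ s H).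
  assert (Hp := rr_pos _ _ _ _ _ _ _ _ s H).
  auto_derive.
  - repeat split; try (eexists; eassumption). lra.
  - rwD2 HV. rwD2 HR. field. lra.
Qed.

Lemma Lx_const G M x y z vx vy vz t t0 : Traj G M x y z vx vy vz ->
  y t * vz t - z t * vy t = y t0 * vz t0 - z t0 * vy t0.
Proof.
  intros H. apply (const_of_deriv0 (fun s => y s * vz s - z s * vy s)).
  intro s. destruct H as (Hr & Hx & Hy & Hz & Hvx & Hvy & Hvz).
  auto_derive.
  - repeat split; try exd.
  - rwD2 (Hvy s). rwD2 (Hvz s). rwD2 (Hy s). rwD2 (Hz s). field. apply Rgt_not_eq, Hr.
Qed.

Lemma Ly_const G M x y z vx vy vz t t0 : Traj G M x y z vx vy vz ->
  z t * vx t - x t * vz t = z t0 * vx t0 - x t0 * vz t0.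
Proof.
  intros H. apply (const_of_deriv0 (fun s => z s * vx s - x s * vz s)).
  intro s. destruct H as (Hr & Hx & Hy & Hz & Hvx & Hvy & Hvz).
  auto_derive.
  - repeat split; try exd.
  - rwD2 (Hvx s). rwD2 (Hvz s). rwD2 (Hx s). rwD2 (Hz s). field. apply Rgt_not_eq, Hr.
Qed.

Lemma Lz_const G M x y z vx vy vz t t0 : Traj G M x y z vx vy vz ->
  x t * vy t - y t * vx t = x t0 * vy t0 - y t0 * vx t0.
Proof.
  intros H. apply (const_of_deriv0 (fun s => x s * vy s - y s * vx s)).
  intro s. destruct H as (Hr & Hx & Hy & Hz & Hvx & Hvy & Hvz).
  auto_derive.
  - repeat split; try exd.
  - rwD2 (Hvx s). rwD2 (Hvy s). rwD2 (Hx s). rwD2 (Hy s). field. apply Rgt_not_eq, Hr.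
Qed.

Lemma cont_pt_of_exd (f : R -> R) t : ex_derive f t -> continuity_pt f t.
Proof. intro H. apply continuity_pt_filterlim. apply (ex_derive_continuous f). exact H. Qed.

Lemma no_radial G M x y z vx vy vz t0 : Traj G M x y z vx vy vz -> 0 < G -> 0 < M ->
  0 < VV vx vy vz 0 / 2 - G * M / rr x y z 0 ->
  x t0 = 0 -> y t0 = 0 -> vx t0 = 0 -> vy t0 = 0 -> False.
Proof.
  intros H HG HM HE H1 H2 H3 H4.
  set (E0 := VV vx vy vz 0 / 2 - G * M / rr x y z 0) in *.
  set (s := fun t => pp x y z vx vy vz t / rr x y z t).
  assert (Hs2 : forall t, 2 * E0 <= s t ^ 2).
  { intro t.
    assert (A := Lx_const _ _ _ _ _ _ _ _ t t0 H).
    assert (B := Ly_const _ _ _ _ _ _ _ _ t t0 H).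
    assert (C := Lz_const _ _ _ _ _ _ _ _ t t0 H).
    rewrite ?H1, ?H2, ?H3, ?H4 in A, B, C.
    assert (En := energy_const _ _ _ _ _ _ _ _ t H). fold E0 in En.
    assert (Hp := rr_pos _ _ _ _ _ _ _ _ t H).
    assert (Hn := norm3_sq (x t) (y t) (z t)).
    assert (Lag : pp x y z vx vy vz t ^ 2 = rr x y z t ^ 2 * VV vx vy vz t).
    { unfold rr. rewrite Hn. unfold pp, VV.
      transitivity ((x t * vx t + y t * vy t + z t * vz t) ^ 2 +
         (y t * vz t - z t * vy t)^2 + (z t * vx t - x t * vz t)^2 + (x t * vy t - y t * vx t)^2).
      - rewrite A, B, C, H1, H2, H3, H4. ring.
      - ring. }
    unfold s. replace ((pp x y z vx vy vz t / rr x y z t) ^ 2) with (pp x y z vx vy vz t ^ 2 / rr x y z t ^ 2) by (field; lra).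
    rewrite Lag. replace (rr x y z t ^ 2 * VV vx vy vz t / rr x y z t ^ 2) with (VV vx vy vz t) by (field; lra).
    assert (0 < G * M / rr x y z t) by (apply Rdiv_lt_0_compat; nra).
    lra. }
  assert (Hsc : continuity s).
  { intro t. apply cont_pt_of_exd. unfold s.
    assert (HR := rr_derive _ _ _ _ _ _ _ _ t H).
    assert (Hp := rr_pos _ _ _ _ _ _ _ _ t H).
    assert (HP := pp_exd _ _ _ _ _ _ _ _ t H).
    auto_derive. repeat split; try (eexists; eassumption); auto; lra. }
  assert (Hrc : forall t, continuity_pt (rr x y z) t).
  { intro t. apply cont_pt_of_exd. eexists. apply (rr_derive _ _ _ _ _ _ _ _ t H). }
  set (c := sqrt (2 * E0)).
  assert (Hc : 0 < c) by (apply sqrt_lt_R0; lra).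
  assert (Hc2 : c ^ 2 = 2 * E0) by (unfold c; rewrite pow2_sqrt; lra).
  set (r0 := rr x y z 0).
  assert (Hr0 : 0 < r0) by apply (rr_pos _ _ _ _ _ _ _ _ 0 H).
  set (T := r0 / c + 1).
  assert (HT : 0 < T) by (unfold T; assert (0 < r0 / c) by (apply Rdiv_lt_0_compat; lra); lra).
  assert (HcT : c * T = r0 + c) by (unfold T; field; lra).
  destruct (MVT_gen (rr x y z) 0 T s) as (c1 & Hc1 & E1).
  { intros u _. apply (rr_derive _ _ _ _ _ _ _ _ u H). }
  { intros u _. apply Hrc. }
  destruct (MVT_gen (rr x y z) (-T) 0 s) as (c2 & Hc2' & E2).
  { intros u _. apply (rr_derive _ _ _ _ _ _ _ _ u H). }
  { intros u _. apply Hrc. }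
  rewrite Rmin_left, Rmax_right in Hc1 by lra.
  rewrite Rmin_left, Rmax_right in Hc2' by lra.
  assert (P1 := rr_pos _ _ _ _ _ _ _ _ T H).
  assert (P2 := rr_pos _ _ _ _ _ _ _ _ (-T) H).
  fold r0 in E1, E2.
  assert (S1 := Hs2 c1). assert (S2 := Hs2 c2).
  assert (Q1 : 0 < s c1).
  { destruct (Rle_lt_dec (s c1) 0) as [h|h]; auto.
    assert (s c1 <= - c) by nra. exfalso. nra. }
  assert (Q2 : s c2 < 0).
  { destruct (Rle_lt_dec 0 (s c2)) as [h|h]; auto.
    assert (c <= s c2) by nra. exfalso. nra. }
  assert (Hlt : c2 < c1).
  { destruct (Rlt_le_dec c2 c1) as [h|h]; auto. assert (c1 = 0) by lra. assert (c2 = 0) by lra.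
    subst. lra. }
  destruct (IVT s c2 c1 Hsc Hlt Q2 Q1) as (w & _ & Hw).
  assert (S3 := Hs2 w). rewrite Hw in S3. lra.
Qed.

Lemma between_ball u v s t0 d : Rmin u v <= s <= Rmax u v -> Rabs (u - t0) < d -> Rabs (v - t0) < d ->
  Rabs (s - t0) < d.
Proof.
  intros Hs Hu Hv. apply Rabs_lt_between in Hu, Hv. apply Rabs_lt_between.
  destruct (Rle_lt_dec u v).
  - rewrite Rmin_left, Rmax_right in Hs by lra. lra.
  - rewrite Rmin_right, Rmax_left in Hs by lra. lra.
Qed.

Lemma ball_of_cont (f : R -> R) t0 : continuity_pt f t0 -> 0 < f t0 ->
  exists d, 0 < d /\ forall s, Rabs (s - t0) < d -> 0 < f s.
Proof.
  intros Hc Hp. destruct (Hc (f t0) Hp) as (d & Hd & Hf).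
  exists d. split; auto. intros s Hs.
  destruct (Req_dec s t0) as [->|Hne]; auto.
  assert (A : dist R_met (f s) (f t0) < f t0).
  { apply Hf. split. split. exact I. auto. simpl. unfold R_dist. exact Hs. }
  simpl in A. unfold R_dist in A.
  apply Rabs_lt_between in A. lra.
Qed.

Lemma rho_exd G M x y z vx vy vz t : Traj G M x y z vx vy vz -> 0 < rho x y t ->
  ex_derive (rho x y) t.
Proof. intros H Hp. eexists. apply (rho_derive _ _ _ _ _ _ _ _ t H Hp). Qed.

Lemma local_pos K G M omega Re x y z vx vy vz t0 : Traj G M x y z vx vy vz ->
  K = 2 * omega * Re -> 0 < rho x y t0 ->
  exists d, 0 < d /\ forall u v, Rabs (u - t0) < d -> Rabs (v - t0) < d ->
    is_RInt (ff G M omega Re x y z vx vy vz) u v (Gf K x y z vx vy vz v - Gf K x y z vx vy vz u).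
Proof.
  intros H HK Hp.
  destruct (ball_of_cont (rho x y) t0) as (d & Hd & Hb); auto.
  { apply cont_pt_of_exd. apply (rho_exd G M x y z vx vy vz); auto. }
  exists d. split; auto. intros u v Hu Hv.
  assert (Hs : forall s, Rmin u v <= s <= Rmax u v -> 0 < rho x y s).
  { intros s Hs. apply Hb. apply (between_ball u v); auto. }
  apply (piece K G M omega Re x y z vx vy vz (rho x y) (fun s => qq x y vx vy s / rho x y s)); auto.
  - intros s Hs'. apply (rho_derive G M x y z vx vy vz); auto.
  - intros s Hs'. assert (A := Hs s Hs').
    assert (B := rho_exd _ _ _ _ _ _ _ _ s H A).
    assert (C := qq_exd _ _ _ _ _ _ _ _ s H).
    auto_derive. repeat split; auto. lra.
  - intros s Hs'. unfold ff. apply force_eq; auto. apply Hs. lra.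
Qed.

Lemma locally_open (P : R -> Prop) a b s : (forall y, a < y < b -> P y) -> a < s < b -> locally s P.
Proof.
  intros HP Hs.
  assert (He : 0 < Rmin (s - a) (b - s)) by (apply Rmin_pos; lra).
  exists (mkposreal _ He). intros y Hy. apply HP.
  change (Rabs (y - s) < Rmin (s - a) (b - s)) in Hy.
  apply Rabs_lt_between in Hy.
  assert (Rmin (s - a) (b - s) <= s - a) by apply Rmin_l.
  assert (Rmin (s - a) (b - s) <= b - s) by apply Rmin_r.
  lra.
Qed.

Lemma half K G M omega Re x y z vx vy vz (al be nn sg : R) u t0 :
  Traj G M x y z vx vy vz -> K = 2 * omega * Re ->
  (forall s, Rmin u t0 <= s <= Rmax u t0 -> rho x y s = sg * (al * x s + be * y s) / nn) ->
  (forall s, Rmin u t0 < s < Rmax u t0 -> 0 < rho x y s) ->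
  0 < nn ->
  is_RInt (ff G M omega Re x y z vx vy vz) u t0 (Gf K x y z vx vy vz t0 - Gf K x y z vx vy vz u).
Proof.
  intros H HK Hrho Hpos Hnn.
  set (h := fun s => sg * (al * x s + be * y s) / nn).
  set (dh := fun s => sg * (al * vx s + be * vy s) / nn).
  assert (Hd : forall s, is_derive h s (dh s)).
  { intro s. destruct H as (Hr & Hx & Hy & _).
    unfold h, dh. auto_derive.
    - repeat split; try exd. 
    - rwD2 (Hx s). rwD2 (Hy s). field. lra. }
  apply (piece K G M omega Re x y z vx vy vz h dh); auto.
  - intros s _. destruct (traj_exd _ _ _ _ _ _ _ _ s H) as (?&?&?&?&?&?).
    unfold dh. auto_derive. repeat split; auto.
  - intros s Hs. symmetry. apply Hrho. auto.
  - intros s Hs. unfold ff. rewrite (force_eq K G M omega Re x y z vx vy vz s H HK (Hpos s Hs)).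
    assert (E1 : h s = rho x y s) by (symmetry; apply Hrho; lra).
    assert (E2 : dh s = qq x y vx vy s / rho x y s).
    { assert (D1 := rho_derive _ _ _ _ _ _ _ _ s H (Hpos s Hs)).
      assert (D2 : is_derive (rho x y) s (dh s)).
      { apply (is_derive_ext_loc h). 2: apply Hd.
        apply (locally_open _ (Rmin u t0) (Rmax u t0)); auto.
        intros y0 Hy0. symmetry. apply Hrho. lra. }
      rewrite <- (is_derive_unique _ _ _ D1). rewrite <- (is_derive_unique _ _ _ D2). reflexivity. }
    unfold Dform. rewrite E1, E2. reflexivity.
Qed.

Lemma sign_near (f : R -> R) (t0 l : R) : is_derive f t0 l -> 0 < l -> f t0 = 0 ->
  exists d, 0 < d /\ forall s, Rabs (s - t0) < d -> (s < t0 -> f s < 0) /\ (t0 < s -> 0 < f s).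
Proof.
  intros Hd Hl H0. apply is_derive_Reals in Hd.
  destruct (Hd l Hl) as (d & Hdd).
  exists d. split. apply cond_pos. intros s Hs.
  assert (Q : forall s, s <> t0 -> Rabs (s - t0) < d -> 0 < f s / (s - t0)).
  { intros s' Hne Hs'. assert (A := Hdd (s' - t0)).
    replace (t0 + (s' - t0)) with s' in A by ring. rewrite H0 in A.
    assert (B : Rabs ((f s' - 0) / (s' - t0) - l) < l). { apply A; auto. lra. }
    apply Rabs_lt_between in B. replace (f s' - 0) with (f s') in B by ring. lra. }
  split; intro Hlt.
  - assert (A := Q s ltac:(lra) Hs).
    destruct (Rle_lt_dec 0 (f s)) as [h|h]; auto. exfalso.
    assert (f s / (s - t0) <= 0). { unfold Rdiv. assert (0 < / (t0 - s)) by (apply Rinv_0_lt_compat; lra).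
      replace (/ (s - t0)) with (- / (t0 - s)) by (field; lra). nra. }
    lra.
  - assert (A := Q s ltac:(lra) Hs).
    destruct (Rle_lt_dec (f s) 0) as [h|h]; auto. exfalso.
    assert (f s / (s - t0) <= 0). { unfold Rdiv. assert (0 < / (s - t0)) by (apply Rinv_0_lt_compat; lra). nra. }
    lra.
Qed.

Lemma local_zero K G M omega Re x y z vx vy vz t0 : Traj G M x y z vx vy vz ->
  0 < G -> 0 < M -> 0 < VV vx vy vz 0 / 2 - G * M / rr x y z 0 ->
  K = 2 * omega * Re -> rho x y t0 = 0 ->
  exists d, 0 < d /\ forall u v, Rabs (u - t0) < d -> Rabs (v - t0) < d ->
    is_RInt (ff G M omega Re x y z vx vy vz) u v (Gf K x y z vx vy vz v - Gf K x y z vx vy vz u).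
Proof.
  intros H HG HM HE HK H0.
  assert (Hxy : x t0 = 0 /\ y t0 = 0).
  { unfold rho in H0. apply sqrt_eq_0 in H0; [|nra]. split; nra. }
  destruct Hxy as [Hx0 Hy0].
  set (al := vx t0). set (be := vy t0).
  assert (Hn2 : 0 < al ^ 2 + be ^ 2).
  { destruct (Rle_lt_dec (al^2+be^2) 0) as [h|h]; auto. exfalso.
    apply (no_radial G M x y z vx vy vz t0); auto; unfold al, be in h; nra. }
  assert (Hz0 : z t0 <> 0).
  { intro E. assert (A := rr_pos _ _ _ _ _ _ _ _ t0 H). assert (B := norm3_sq (x t0) (y t0) (z t0)).
    unfold rr in A. rewrite Hx0, Hy0, E in B. rewrite Hx0, Hy0, E in A. nra. }
  assert (Hpar : forall t, al * y t - be * x t = 0).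
  { intro t.
    assert (A := Lx_const _ _ _ _ _ _ _ _ t t0 H).
    assert (B := Ly_const _ _ _ _ _ _ _ _ t t0 H).
    assert (C := Lz_const _ _ _ _ _ _ _ _ t t0 H).
    assert (I : x t * (y t * vz t - z t * vy t) + y t * (z t * vx t - x t * vz t) + z t * (x t * vy t - y t * vx t) = 0) by ring.
    rewrite A, B, C, Hx0, Hy0 in I. fold al be in I.
    assert (I2 : z t0 * (al * y t - be * x t) = 0) by (rewrite <- I; ring).
    apply Rmult_integral in I2. destruct I2; [contradiction|auto]. }
  set (w := fun t => al * x t + be * y t).
  set (nn := sqrt (al ^ 2 + be ^ 2)).
  assert (Hnn : 0 < nn) by (apply sqrt_lt_R0; lra).
  assert (Hnn2 : nn ^ 2 = al ^ 2 + be ^ 2) by (unfold nn; rewrite pow2_sqrt; lra).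
  assert (Hrho : forall t sg, (sg = 1 \/ sg = -1) -> 0 <= sg * w t -> rho x y t = sg * w t / nn).
  { intros t sg Hsg Hw. unfold rho.
    replace (x t ^ 2 + y t ^ 2) with ((sg * w t / nn) ^ 2).
    - apply sqrt_pow2. apply Rdiv_le_0_compat; lra.
    - replace ((sg * w t / nn) ^ 2) with (sg ^ 2 * w t ^ 2 / nn ^ 2) by (field; lra).
      rewrite Hnn2. assert (Hs2 : sg ^ 2 = 1) by (destruct Hsg; subst; ring). rewrite Hs2.
      apply Rmult_eq_reg_r with (al ^ 2 + be ^ 2); [|lra].
      field_simplify; [|lra].
      assert (P := Hpar t). unfold w.
      transitivity ((al * x t + be * y t) ^ 2 + (al * y t - be * x t) ^ 2).
      + rewrite P. ring.
      + ring. }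
  assert (Hw : is_derive w t0 (al ^ 2 + be ^ 2)).
  { destruct H as (Hr & Hx & Hy & _). unfold w. auto_derive.
    - repeat split; try exd.
    - rwD2 (Hx t0). rwD2 (Hy t0). fold al be. ring. }
  assert (Hw0 : w t0 = 0) by (unfold w; rewrite Hx0, Hy0; ring).
  destruct (sign_near w t0 _ Hw Hn2 Hw0) as (d & Hd & Hsign).
  exists d. split; auto.
  assert (Side : forall u, Rabs (u - t0) < d ->
    is_RInt (ff G M omega Re x y z vx vy vz) u t0 (Gf K x y z vx vy vz t0 - Gf K x y z vx vy vz u)).
  { intros u Hu. apply Rabs_lt_between in Hu.
    destruct (Rle_lt_dec u t0) as [Hut|Hut].
    - apply (half K G M omega Re x y z vx vy vz al be nn (-1)); auto.
      + rewrite Rmin_left, Rmax_right by lra. intros s Hs.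
        apply (Hrho s (-1)); auto.
        destruct (Req_dec s t0) as [->|Hne]. rewrite Hw0; lra.
        assert (w s < 0). { apply (Hsign s). apply Rabs_lt_between; lra. lra. } lra.
      + rewrite Rmin_left, Rmax_right by lra. intros s Hs.
        assert (w s < 0). { apply (Hsign s). apply Rabs_lt_between; lra. lra. }
        rewrite (Hrho s (-1)) by (auto; lra). apply Rdiv_lt_0_compat; lra.
    - apply (half K G M omega Re x y z vx vy vz al be nn 1); auto.
      + rewrite Rmin_right, Rmax_left by lra. intros s Hs.
        apply (Hrho s 1); auto.
        destruct (Req_dec s t0) as [->|Hne]. rewrite Hw0; lra.
        assert (0 < w s). { apply (Hsign s). apply Rabs_lt_between; lra. lra. } lra.
      + rewrite Rmin_right, Rmax_left by lra. intros s Hs.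
        assert (0 < w s). { apply (Hsign s). apply Rabs_lt_between; lra. lra. }
        rewrite (Hrho s 1) by (auto; lra). apply Rdiv_lt_0_compat; lra. }
  intros u v Hu Hv.
  assert (I1 := Side u Hu).
  assert (I2 := is_RInt_swap _ _ _ _ (Side v Hv)).
  assert (I3 := is_RInt_Chasles _ _ _ _ _ _ I1 I2).
  replace (Gf K x y z vx vy vz v - Gf K x y z vx vy vz u) with
    (plus (Gf K x y z vx vy vz t0 - Gf K x y z vx vy vz u) (opp (Gf K x y z vx vy vz t0 - Gf K x y z vx vy vz v))).
  exact I3.
  unfold plus, opp; simpl. ring.
Qed.

Lemma global K G M omega Re x y z vx vy vz : Traj G M x y z vx vy vz ->
  0 < G -> 0 < M -> 0 < VV vx vy vz 0 / 2 - G * M / rr x y z 0 ->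
  K = 2 * omega * Re -> forall a b,
  is_RInt (ff G M omega Re x y z vx vy vz) a b (Gf K x y z vx vy vz b - Gf K x y z vx vy vz a).
Proof.
  intros H HG HM HE HK.
  set (f := ff G M omega Re x y z vx vy vz).
  set (g := Gf K x y z vx vy vz).
  assert (Loc : forall t0, exists d : posreal, forall u v, Rabs (u - t0) < d -> Rabs (v - t0) < d ->
    is_RInt f u v (g v - g u)).
  { intro t0. assert (Hr : 0 <= rho x y t0) by apply sqrt_pos.
    destruct (Rle_lt_dec (rho x y t0) 0) as [h|h].
    - destruct (local_zero K G M omega Re x y z vx vy vz t0) as (d & Hd & P); auto. lra.
      exists (mkposreal d Hd). exact P.
    - destruct (local_pos K G M omega Re x y z vx vy vz t0) as (d & Hd & P); auto.
      exists (mkposreal d Hd). exact P. }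
  set (delta := fun t => pos_div_2 (proj1_sig (constructive_indefinite_description _ (Loc t)))).
  assert (Hdel : forall t u v, Rabs (u - t) < 2 * delta t -> Rabs (v - t) < 2 * delta t ->
    is_RInt f u v (g v - g u)).
  { intros t u v Hu Hv. unfold delta in Hu, Hv.
    destruct (constructive_indefinite_description _ (Loc t)) as [d Pd]. simpl in Hu, Hv.
    apply Pd; lra. }
  assert (Main : forall a b, a <= b -> is_RInt f a b (g b - g a)).
  { intros a b Hab.
    destruct (compactness_value_1d a b delta) as [d Hd].
    assert (Step : forall u v, a <= u <= b -> Rabs (v - u) < d -> is_RInt f u v (g v - g u)).
    { intros u v Hu Hv.
      destruct (classic (is_RInt f u v (g v - g u))) as [ok|nok]; auto.
      exfalso. apply (Hd u Hu). intros (t & _ & H1 & H2).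
      apply nok. apply (Hdel t).
      - assert (0 < delta t) by apply cond_pos. lra.
      - apply Rabs_lt_between in H1, Hv. apply Rabs_lt_between. lra. }
    assert (Ind : forall n : nat, forall v, a <= v <= b -> v - a <= INR n * (d / 2) ->
      is_RInt f a v (g v - g a)).
    { induction n as [|n IH]; intros v Hv Hn.
      - simpl in Hn. assert (v = a) by lra. subst v.
        replace (g a - g a) with (@zero R_NormedModule) by (unfold zero; simpl; ring).
        apply is_RInt_point.
      - rewrite S_INR in Hn.
        assert (Hd0 : 0 < d) by apply cond_pos.
        set (u := Rmax a (v - d / 2)).
        assert (Hu1 : a <= u) by apply Rmax_l.
        assert (Hu2 : v - d / 2 <= u) by apply Rmax_r.
        assert (Hu3 : u <= v) by (unfold u; apply Rmax_lub; lra).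
        assert (Hu4 : u - a <= INR n * (d / 2)).
        { unfold u. destruct (Rle_lt_dec a (v - d/2)).
          - rewrite Rmax_right by lra. lra.
          - rewrite Rmax_left by lra. assert (0 <= INR n) by apply pos_INR. nra. }
        assert (I1 := IH u ltac:(lra) Hu4).
        assert (I2 := Step u v ltac:(lra) ltac:(apply Rabs_lt_between; lra)).
        assert (I3 := is_RInt_Chasles _ _ _ _ _ _ I1 I2).
        replace (g v - g a) with (plus (g u - g a) (g v - g u)) by (unfold plus; simpl; ring).
        exact I3. }
    destruct (INR_unbounded ((b - a) / (d / 2))) as [n Hn].
    apply (Ind n). lra.
    assert (Hd0 : 0 < d) by apply cond_pos.
    apply Rmult_lt_compat_r with (r := d / 2) in Hn; [|lra].
    replace ((b - a) / (d / 2) * (d / 2)) with (b - a) in Hn by (field; lra). lra. }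
  intros a b. destruct (Rle_lt_dec a b) as [h|h].
  - apply Main; auto.
  - assert (I := is_RInt_swap _ _ _ _ (Main b a ltac:(lra))).
    replace (g b - g a) with (opp (g a - g b)) by (unfold opp; simpl; ring). exact I.
Qed.

Lemma core_bound (fT ft dfc l T t eps : R) : 0 < eps ->
  ft - fT = dfc * (t - T) -> Rabs (dfc - l) < eps / 2 ->
  Rabs (fT - l * T) < eps / 2 * Rabs t -> 0 < (t - T) / t < 1 -> t <> 0 ->
  Rabs (ft / t - l) < eps.
Proof.
  intros He E1 H1 H2 Hu Ht.
  replace (ft / t - l) with ((fT - l * T) / t + (dfc - l) * ((t - T) / t)) by (replace ft with (fT + dfc * (t - T)) by lra; field; auto).
  set (u := (t - T) / t) in *.
  assert (He1 : Rabs ((fT - l * T) / t) < eps / 2).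
  { unfold Rdiv. rewrite Rabs_mult, Rabs_inv.
    assert (0 < Rabs t) by (apply Rabs_pos_lt; auto).
    apply Rmult_lt_reg_r with (Rabs t); auto. field_simplify; lra. }
  apply Rabs_lt_between in He1, H1. apply Rabs_lt_between.
  set (e1 := (fT - l * T) / t) in *. set (e2 := dfc - l) in *.
  nra.
Qed.

Lemma lim_div_p (f df : R -> R) (l : R) : (forall t, is_derive f t (df t)) ->
  is_lim df p_infty l -> is_lim (fun t => f t / t) p_infty l.
Proof.
  intros Hd Hl. apply is_lim_spec. apply is_lim_spec in Hl. intro eps.
  destruct (Hl (pos_div_2 eps)) as [M1 HM1]. simpl in HM1.
  assert (He := cond_pos eps).
  set (T := Rmax M1 0 + 1).
  assert (HT0 : 0 < T) by (unfold T; assert (0 <= Rmax M1 0) by apply Rmax_r; lra).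
  assert (HT1 : M1 < T) by (unfold T; assert (M1 <= Rmax M1 0) by apply Rmax_l; lra).
  set (A := Rabs (f T - l * T)).
  exists (Rmax T (2 * A / eps) + 1). intros t Ht.
  assert (Ht1 : T < t) by (assert (T <= Rmax T (2 * A / eps)) by apply Rmax_l; lra).
  assert (Ht2 : 2 * A / eps < t) by (assert (2 * A / eps <= Rmax T (2 * A / eps)) by apply Rmax_r; lra).
  destruct (MVT_gen f T t df) as (c & Hc & Ec).
  { intros s _. apply Hd. }
  { intros s _. apply cont_pt_of_exd. eexists; apply Hd. }
  rewrite Rmin_left, Rmax_right in Hc by lra.
  apply (core_bound (f T) (f t) (df c) l T t eps); auto.
  - apply HM1. lra.
  - rewrite (Rabs_pos_eq t) by lra. fold A.
    apply Rmult_lt_compat_r with (r := eps) in Ht2; auto.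
    replace (2 * A / eps * eps) with (2 * A) in Ht2 by (field; lra). lra.
  - split. apply Rdiv_lt_0_compat; lra.
    apply Rmult_lt_reg_r with t. lra. field_simplify; lra.
  - lra.
Qed.

Lemma lim_div_m (f df : R -> R) (l : R) : (forall t, is_derive f t (df t)) ->
  is_lim df m_infty l -> is_lim (fun t => f t / t) m_infty l.
Proof.
  intros Hd Hl. apply is_lim_spec. apply is_lim_spec in Hl. intro eps.
  destruct (Hl (pos_div_2 eps)) as [M1 HM1]. simpl in HM1.
  assert (He := cond_pos eps).
  set (T := Rmin M1 0 - 1).
  assert (HT0 : T < 0) by (unfold T; assert (Rmin M1 0 <= 0) by apply Rmin_r; lra).
  assert (HT1 : T < M1) by (unfold T; assert (Rmin M1 0 <= M1) by apply Rmin_l; lra).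
  set (A := Rabs (f T - l * T)).
  exists (Rmin T (- (2 * A / eps)) - 1). intros t Ht.
  assert (Ht1 : t < T) by (assert (Rmin T (- (2 * A / eps)) <= T) by apply Rmin_l; lra).
  assert (Ht2 : t < - (2 * A / eps)) by (assert (Rmin T (- (2 * A / eps)) <= - (2 * A / eps)) by apply Rmin_r; lra).
  destruct (MVT_gen f T t df) as (c & Hc & Ec).
  { intros s _. apply Hd. }
  { intros s _. apply cont_pt_of_exd. eexists; apply Hd. }
  rewrite Rmin_right, Rmax_left in Hc by lra.
  apply (core_bound (f T) (f t) (df c) l T t eps); auto.
  - apply HM1. lra.
  - rewrite (Rabs_left t) by lra. fold A.
    assert (2 * A / eps < - t) by lra.
    apply Rmult_lt_compat_r with (r := eps) in H; auto.
    replace (2 * A / eps * eps) with (2 * A) in H by (field; lra). lra.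
  - split.
    + replace ((t - T) / t) with ((T - t) / (- t)) by (field; lra). apply Rdiv_lt_0_compat; lra.
    + replace ((t - T) / t) with ((T - t) / (- t)) by (field; lra).
      apply Rmult_lt_reg_r with (- t). lra. field_simplify; lra.
  - lra.
Qed.

Lemma lm (F : (R -> Prop) -> Prop) {FF : Filter F} (f g : R -> R) a b :
  filterlim f F (locally a) -> filterlim g F (locally b) ->
  filterlim (fun t => f t * g t) F (locally (a * b)).
Proof.
  intros Hf Hg. apply (filterlim_comp_2 f g Rmult Hf Hg).
  exact (filterlim_mult (K := R_AbsRing) a b).
Qed.

Lemma lp (F : (R -> Prop) -> Prop) {FF : Filter F} (f g : R -> R) a b :
  filterlim f F (locally a) -> filterlim g F (locally b) ->
  filterlim (fun t => f t + g t) F (locally (a + b)).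
Proof.
  intros Hf Hg. apply (filterlim_comp_2 f g Rplus Hf Hg).
  exact (filterlim_plus (V := R_NormedModule) a b).
Qed.

Lemma lc (F : (R -> Prop) -> Prop) {FF : Filter F} (a : R) :
  filterlim (fun _ => a) F (locally a).
Proof. apply filterlim_const. Qed.

Lemma linv (F : (R -> Prop) -> Prop) {FF : Filter F} (f : R -> R) a : a <> 0 ->
  filterlim f F (locally a) -> filterlim (fun t => / f t) F (locally (/ a)).
Proof.
  intros Ha Hf. apply (filterlim_comp _ _ _ f Rinv F (locally a) (locally (/ a)) Hf).
  exact (continuous_Rinv a Ha).
Qed.

Lemma lsqrt (F : (R -> Prop) -> Prop) {FF : Filter F} (f : R -> R) a :
  filterlim f F (locally a) -> filterlim (fun t => sqrt (f t)) F (locally (sqrt a)).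
Proof.
  intros Hf. apply (filterlim_comp _ _ _ f sqrt F (locally a) (locally (sqrt a)) Hf).
  exact (continuous_sqrt a).
Qed.

Lemma lim_ge (F : (R -> Prop) -> Prop) {FF : ProperFilter F} (f : R -> R) l c :
  filterlim f F (locally l) -> F (fun t => c <= f t) -> c <= l.
Proof.
  intros Hf Hc. destruct (Rle_lt_dec c l) as [h|h]; auto. exfalso.
  assert (He : 0 < c - l) by lra.
  assert (B : F (fun t => Rabs (f t - l) < c - l)).
  { apply (Hf (fun y => Rabs (y - l) < c - l)). exists (mkposreal _ He). intros y Hy. exact Hy. }
  destruct (Hierarchy.filter_ex _ (filter_and _ _ B Hc)) as [t [H1 H2]].
  apply Rabs_lt_between in H1. lra.
Qed.

Lemma sqrt_scale u t : 0 <= u -> t <> 0 -> sqrt u = Rabs t * sqrt (u / t ^ 2).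
Proof.
  intros Hu Ht. rewrite <- sqrt_Rsqr_abs. rewrite <- sqrt_mult_alt.
  - f_equal. unfold Rsqr. field. auto.
  - apply Rle_0_sqr.
Qed.

Lemma lim_end (F : (R -> Prop) -> Prop) {FF : ProperFilter F} K G M x y z vx vy vz ax ay az :
  Traj G M x y z vx vy vz -> 0 < G -> 0 < M -> 0 < VV vx vy vz 0 / 2 - G * M / rr x y z 0 ->
  filterlim (fun t => x t / t) F (locally ax) ->
  filterlim (fun t => y t / t) F (locally ay) ->
  filterlim (fun t => z t / t) F (locally az) ->
  filterlim vx F (locally ax) -> filterlim vy F (locally ay) -> filterlim vz F (locally az) ->
  filterlim (fun t => / Rabs t) F (locally 0) -> F (fun t => t <> 0) ->
  ax ^ 2 + ay ^ 2 + az ^ 2 = 2 * (VV vx vy vz 0 / 2 - G * M / rr x y z 0) /\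
  filterlim (Gf K x y z vx vy vz) F
    (locally (- K * (2 * (VV vx vy vz 0 / 2 - G * M / rr x y z 0)) * cos (declination ax ay az))).
Proof.
  intros H HG HM HE LX LY LZ LVX LVY LVZ LI Hnz.
  set (E0 := VV vx vy vz 0 / 2 - G * M / rr x y z 0) in *.
  assert (FF' : Filter F) by (destruct FF; auto).
  set (S := ax * ax + ay * ay + az * az).
  assert (LV : filterlim (VV vx vy vz) F (locally S)).
  { apply (filterlim_ext (fun t => vx t * vx t + vy t * vy t + vz t * vz t)).
    { intro t. unfold VV. ring. }
    apply (@lp F FF'); [apply (@lp F FF')|]; apply (@lm F FF'); auto. }
  assert (Hen : forall t, VV vx vy vz t = 2 * E0 + 2 * G * M * / rr x y z t).
  { intro t. assert (A := energy_const _ _ _ _ _ _ _ _ t H). fold E0 in A.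
    assert (B := rr_pos _ _ _ _ _ _ _ _ t H). 
    replace (VV vx vy vz t) with (2 * (VV vx vy vz t / 2 - G * M / rr x y z t) + 2 * G * M * / rr x y z t)
      by (field; lra). rewrite A. ring. }
  assert (HS : 2 * E0 <= S).
  { apply (lim_ge F (VV vx vy vz)); auto. apply filter_forall. intro t. rewrite Hen.
    assert (B := rr_pos _ _ _ _ _ _ _ _ t H).
    assert (0 < / rr x y z t) by (apply Rinv_0_lt_compat; lra).
    assert (0 < G * M) by nra. nra. }
  assert (HSp : 0 < S) by lra.
  assert (HsS : 0 < sqrt S) by (apply sqrt_lt_R0; lra).
  set (X := fun t => x t / t). set (Y := fun t => y t / t). set (Z := fun t => z t / t).
  set (X2 := fun t => X t * X t + Y t * Y t).
  set (S3 := fun t => X2 t + Z t * Z t).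
  assert (LX2 : filterlim X2 F (locally (ax * ax + ay * ay))) by (apply (@lp F FF'); apply (@lm F FF'); auto).
  assert (LS3 : filterlim S3 F (locally S)) by (apply (@lp F FF'); auto; apply (@lm F FF'); auto).
  assert (Erho : forall t, t <> 0 -> rho x y t = Rabs t * sqrt (X2 t)).
  { intros t Ht. unfold rho. rewrite (sqrt_scale (x t ^ 2 + y t ^ 2) t); [|nra|auto].
    f_equal. f_equal. unfold X2, X, Y. field. auto. }
  assert (Err : forall t, t <> 0 -> rr x y z t = Rabs t * sqrt (S3 t)).
  { intros t Ht. unfold rr, norm3. rewrite (sqrt_scale (x t ^ 2 + y t ^ 2 + z t ^ 2) t); [|nra|auto].
    f_equal. f_equal. unfold S3, X2, X, Y, Z. field. auto. }
  assert (Hnz2 : forall t, t <> 0 -> 0 < Rabs t /\ 0 < sqrt (S3 t)).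
  { intros t Ht. assert (A := rr_pos _ _ _ _ _ _ _ _ t H). rewrite (Err t Ht) in A.
    assert (0 < Rabs t) by (apply Rabs_pos_lt; auto). split; auto.
    assert (0 <= sqrt (S3 t)) by apply sqrt_pos. nra. }
  assert (LIr : filterlim (fun t => / rr x y z t) F (locally (0 * / sqrt S))).
  { apply (filterlim_ext_loc (fun t => / Rabs t * / sqrt (S3 t))).
    { apply (filter_imp (fun t => t <> 0)); auto. intros t Ht.
      rewrite (Err t Ht). destruct (Hnz2 t Ht). field. lra. }
    apply (@lm F FF'); auto. apply (@linv F FF'); [lra|]. apply (@lsqrt F FF'); auto. }
  assert (LV2 : filterlim (VV vx vy vz) F (locally (2 * E0 + 2 * G * M * (0 * / sqrt S)))).
  { apply (filterlim_ext (fun t => 2 * E0 + 2 * G * M * / rr x y z t)).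
    { intro t. symmetry. apply Hen. }
    apply (@lp F FF'). apply (@lc F FF'). apply (@lm F FF'); auto. apply (@lc F FF'). }
  assert (ES : S = 2 * E0).
  { assert (U := filterlim_locally_unique (F := F) _ _ _ LV LV2). rewrite U. ring. }
  split.
  { rewrite <- ES. unfold S. ring. }
  replace (- K * (2 * E0) * cos (declination ax ay az)) with
    (- K * S * (sqrt (ax * ax + ay * ay) * / sqrt S)).
  2:{ rewrite decl_cos.
      - unfold norm3. rewrite ES. unfold Rdiv. f_equal. f_equal. f_equal. ring.
        rewrite <- ES. unfold S. f_equal. f_equal. ring.
      - unfold norm3. replace (ax ^ 2 + ay ^ 2 + az ^ 2) with S by (unfold S; ring). auto. }
  apply (filterlim_ext_loc (fun t => - K * VV vx vy vz t * (sqrt (X2 t) * / sqrt (S3 t)))).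
  { apply (filter_imp (fun t => t <> 0)); auto. intros t Ht.
    unfold Gf. rewrite (Erho t Ht), (Err t Ht). destruct (Hnz2 t Ht). field. lra. }
  apply (@lm F FF'). apply (@lm F FF'). apply (@lc F FF'). auto.
  apply (@lm F FF'). apply (@lsqrt F FF'); auto. apply (@linv F FF'); [lra|]. apply (@lsqrt F FF'); auto.
Qed.

Lemma inv_abs_p : filterlim (fun t => / Rabs t) (Rbar_locally p_infty) (locally 0).
Proof.
  assert (A : is_lim (fun t => / Rabs t) p_infty 0).
  { apply is_lim_spec. intro eps. exists (/ eps). intros t Ht.
    assert (He := cond_pos eps).
    assert (0 < / eps) by (apply Rinv_0_lt_compat; auto).
    rewrite (Rabs_pos_eq t) by lra. rewrite Rminus_0_r.
    rewrite Rabs_pos_eq by (apply Rlt_le, Rinv_0_lt_compat; lra).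
    replace (pos eps) with (/ / eps) by (field; lra). apply Rinv_lt_contravar; nra. }
  exact A.
Qed.

Lemma inv_abs_m : filterlim (fun t => / Rabs t) (Rbar_locally m_infty) (locally 0).
Proof.
  assert (A : is_lim (fun t => / Rabs t) m_infty 0).
  { apply is_lim_spec. intro eps. exists (- / eps). intros t Ht.
    assert (He := cond_pos eps).
    assert (0 < / eps) by (apply Rinv_0_lt_compat; auto).
    rewrite (Rabs_left t) by lra. rewrite Rminus_0_r.
    rewrite Rabs_pos_eq by (apply Rlt_le, Rinv_0_lt_compat; lra).
    replace (pos eps) with (/ / eps) by (field; lra). apply Rinv_lt_contravar; nra. }
  exact A.
Qed.

Theorem proposition3p1
  (G M omega Re : R) (x y z vx vy vz : R -> R) (E : R)
  (v0x v0y v0z v1x v1y v1z : R) :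
  0 < G -> 0 < M ->
  (forall t, 0 < norm3 (x t) (y t) (z t)) ->
  (forall t, is_derive x t (vx t)) ->
  (forall t, is_derive y t (vy t)) ->
  (forall t, is_derive z t (vz t)) ->
  (forall t, is_derive vx t (- G * M * x t / norm3 (x t) (y t) (z t) ^ 3)) ->
  (forall t, is_derive vy t (- G * M * y t / norm3 (x t) (y t) (z t) ^ 3)) ->
  (forall t, is_derive vz t (- G * M * z t / norm3 (x t) (y t) (z t) ^ 3)) ->
  E = / 2 * (vx 0 ^ 2 + vy 0 ^ 2 + vz 0 ^ 2) - G * M / norm3 (x 0) (y 0) (z 0) ->
  0 < E ->
  is_lim vx m_infty v0x -> is_lim vy m_infty v0y -> is_lim vz m_infty v0z ->
  is_lim vx p_infty v1x -> is_lim vy p_infty v1y -> is_lim vz p_infty v1z ->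
  exists dE : R,
    is_RInt_gen
      (fun t => flyby_force_dot_v G M omega Re (x t) (y t) (z t) (vx t) (vy t) (vz t))
      (Rbar_locally m_infty) (Rbar_locally p_infty) dE
    /\ dE / (2 * E)
       = 2 * omega * Re * (cos (declination v0x v0y v0z) - cos (declination v1x v1y v1z)).
Proof.
  intros HG HM Hr Hx Hy Hz Hvx Hvy Hvz HE HEp L0x L0y L0z L1x L1y L1z.
  assert (H : Traj G M x y z vx vy vz) by (exact (conj Hr (conj Hx (conj Hy (conj Hz (conj Hvx (conj Hvy Hvz))))))).
  assert (HE0 : VV vx vy vz 0 / 2 - G * M / rr x y z 0 = E).
  { rewrite HE. unfold VV, rr. field. apply Rgt_not_eq, Hr. }
  set (K := 2 * omega * Re).
  destruct (lim_end (Rbar_locally p_infty) K G M x y z vx vy vz v1x v1y v1z) as [S1 Lp]; auto.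
  { rewrite HE0; auto. }
  { exact (lim_div_p x vx v1x Hx L1x). }
  { exact (lim_div_p y vy v1y Hy L1y). }
  { exact (lim_div_p z vz v1z Hz L1z). }
  { exact inv_abs_p. }
  { exists 0. intros t Ht. lra. }
  destruct (lim_end (Rbar_locally m_infty) K G M x y z vx vy vz v0x v0y v0z) as [S0 Lm]; auto.
  { rewrite HE0; auto. }
  { exact (lim_div_m x vx v0x Hx L0x). }
  { exact (lim_div_m y vy v0y Hy L0y). }
  { exact (lim_div_m z vz v0z Hz L0z). }
  { exact inv_abs_m. }
  { exists 0. intros t Ht. lra. }
  rewrite HE0 in Lp, Lm.
  set (l1 := - K * (2 * E) * cos (declination v1x v1y v1z)) in *.
  set (l0 := - K * (2 * E) * cos (declination v0x v0y v0z)) in *.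
  assert (Glob := global K G M omega Re x y z vx vy vz H HG HM ltac:(rewrite HE0; auto) eq_refl).
  exists (l1 - l0). split.
  - intros P [eps HP].
    assert (He2 : 0 < eps / 2) by (assert (He := cond_pos eps); lra).
    assert (Q0 : Rbar_locally m_infty (fun a => Rabs (Gf K x y z vx vy vz a - l0) < eps / 2)).
    { apply (Lm (fun u => Rabs (u - l0) < eps / 2)). exists (mkposreal _ He2); intros u Hu; exact Hu. }
    assert (Q1 : Rbar_locally p_infty (fun a => Rabs (Gf K x y z vx vy vz a - l1) < eps / 2)).
    { apply (Lp (fun u => Rabs (u - l1) < eps / 2)). exists (mkposreal _ He2); intros u Hu; exact Hu. }
    apply (Filter_prod _ _ _ _ _ Q0 Q1).
    intros a b Ha Hb. simpl in Ha, Hb.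
    exists (Gf K x y z vx vy vz b - Gf K x y z vx vy vz a). split.
    + apply (Glob a b).
    + apply HP. change (Rabs ((Gf K x y z vx vy vz b - Gf K x y z vx vy vz a) - (l1 - l0)) < eps).
      apply Rabs_lt_between in Ha, Hb. apply Rabs_lt_between. lra.
  - unfold l1, l0, K. field. lra.
Qed.
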